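(* Let $n\ge 1$ and let $Y$ be a semistandard Young tableau on the alphabet $\mathcal{A}_n$ which is an $sp_{2n}$-highest weight tableau. Then for every $1\le i\le n$, every entry of $Y$ equal to $i$ lies in the $i$-th row, and every entry equal to $\bar i$ lies in a row strictly below the $i$-th row.
   Context: $\mathcal{A}_n=\{1<2<\dots<n<\bar n<\dots<\bar 2<\bar 1\}$. Young diagrams are in English convention (row 1 on top). Semistandard: entries weakly increase along rows and strictly increase down columns. The reading of $Y$ is the word $a_1\cdots a_N$ obtained by reading each column top to bottom and concatenating columns from rightmost to leftmost. Crystal $B_n$ on $\mathcal{A}_n$: for $1\le i<n$, $\tilde f_i(i)=i+1$, $\tilde f_i(\overline{i+1})=\bar i$; $\tilde f_n(n)=\bar n$; $\tilde f_i(b)=0$ otherwise; $\tilde e_i$ is the partial inverse. $\varepsilon_i(b)=\max\{k:\tilde e_i^k b\ne0\}$, $\varphi_i(b)=\max\{k:\tilde f_i^kb\neq 0\}$. Tensor rule: $\tilde e_i(b_1\otimes b_2)=\tilde e_i(b_1)\otimes b_2$ if $\varphi_i(b_1)\ge\varepsilon_i(b_2)$, else $b_1\otimes\tilde e_i(b_2)$; $\tilde f_i(b_1\otimes b_2)=\tilde f_i(b_1)\otimes b_2$ if $\varphi_i(b_1)>\varepsilon_i(b_2)$, else $b_1\otimes\tilde f_i(b_2)$; iterated as $a_1\otimes\cdots\otimes a_N=(a_1\otimes\cdots\otimes a_{N-1})\otimes a_N$. $Y$ is an $sp_{2n}$-highest weight tableau if $\tilde e_i(a_1\otimes\cdots\otimes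 a_N)=0$ in $B_n^{\otimes N}$ for all $1\le i\le n$. *)

(* Defs.v *)
From mathcomp Require Import all_boot.
Set Implicit Arguments. Unset Strict Implicit. Unset Printing Implicit Defensive.

(* Letters of the alphabet A_n: [L k] is the unbarred letter k,
   [Lb k] is the barred letter \bar k; valid letters have 1 <= k <= n. *)
Inductive letter := L of nat | Lb of nat.

Definition valid_letter (n : nat) (x : letter) : bool :=
  match x with L k | Lb k => (1 <= k) && (k <= n) end.

(* Position in the total order 1 < 2 < ... < n < \bar n < ... < \bar 1. *)
Definition rank (n : nat) (x : letter) : nat :=
  match x with L k => k | Lb k => (2 * n).+1 - k end.

Definition letter_le n (x y : letter) : bool := rank n x <= rank n y.
Definition letter_lt n (x y : letter) : bool := rank n x < rank n y.

(* Crystal operators of B_n on single letters (0 is [None]). *)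
Definition letter_f (n i : nat) (x : letter) : option letter :=
  match x with
  | L k => if (k == i) && (i < n) then Some (L i.+1)
           else if (k == n) && (i == n) then Some (Lb n) else None
  | Lb k => if (k == i.+1) && (i < n) then Some (Lb i) else None
  end.

Definition letter_e (n i : nat) (x : letter) : option letter :=
  match x with
  | L k => if (k == i.+1) && (i < n) then Some (L i) else None
  | Lb k => if (k == i) && (i < n) then Some (Lb i.+1)
            else if (k == n) && (i == n) then Some (L n) else None
  end.

(* max {k <= fuel : g^k x <> 0}; with fuel large enough this is
   max {k : g^k x <> 0} (epsilon_i / phi_i). *)
Definition maxk (T : Type) (fuel : nat) (g : T -> option T) (x : T) : nat :=
  foldr maxn 0 [seq k <- iota 0 fuel.+1 | isSome (iter k (obind g) (Some x))].

Definition word := seq letter.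

(* Crystal operators (e_i, f_i) on words of length N, viewed as
   a_1 (x) ... (x) a_N = (a_1 (x) ... (x) a_{N-1}) (x) a_N, using the tensor rule.
   The fuel 2N'+2 bounds phi_i on words of length N' (each letter has phi_i <= 1). *)
Fixpoint wops (n i N : nat) : (word -> option word) * (word -> option word) :=
  match N with
  | 0 => (fun _ => None, fun _ => None)
  | N'.+1 =>
    let e' := (wops n i N').1 in
    let f' := (wops n i N').2 in
    let phi1 (b : word) := maxk (2 * N').+2 f' b in
    let eps2 (a : letter) := maxk 2 (letter_e n i) a in
    if N' is 0 then
      (fun w => omap (fun b => [:: b]) (letter_e n i (nth (L 0) w 0)),
       fun w => omap (fun b => [:: b]) (letter_f n i (nth (L 0) w 0)))
    else
      (fun w =>
         let b1 := take N' w in let a := nth (L 0) w N' in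
         if eps2 a <= phi1 b1 then omap (fun b => rcons b a) (e' b1)
         else omap (fun b => rcons b1 b) (letter_e n i a),
       fun w =>
         let b1 := take N' w in let a := nth (L 0) w N' in
         if eps2 a < phi1 b1 then omap (fun b => rcons b a) (f' b1)
         else omap (fun b => rcons b1 b) (letter_f n i a))
  end.

Definition word_e (n i : nat) (w : word) : option word := (wops n i (size w)).1 w.
Definition word_f (n i : nat) (w : word) : option word := (wops n i (size w)).2 w.

(* Tableaux: list of rows, row 1 (index 0) on top (English convention). *)
Definition tableau := seq (seq letter).

Definition entry (Y : tableau) (r c : nat) : letter := nth (L 0) (nth [::] Y r) c.

Definition is_ssyt (n : nat) (Y : tableau) : Prop :=
  [/\ sorted geq (map size Y),
      all (all (valid_letter n)) Y,
      all (sorted (letter_le n)) Y &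
      (forall r c, c < size (nth [::] Y r.+1) ->
         letter_lt n (entry Y r c) (entry Y r.+1 c))].

Definition column (Y : tableau) (c : nat) : word :=
  [seq nth (L 0) row c | row <- Y & c < size row].

Definition reading (Y : tableau) : word :=
  flatten [seq column Y c | c <- rev (iota 0 (size (head [::] Y)))].

Definition sp_highest_weight (n : nat) (Y : tableau) : Prop :=
  forall i, 1 <= i <= n -> word_e n i (reading Y) = None.

(* Main.v *)
Require Import Defs.
From HB Require Import structures.
From mathcomp Require Import all_boot zify.

Definition l2s (x : letter) : nat + nat := match x with L k => inl k | Lb k => inr k end.
Definition s2l (s : nat + nat) : letter := match s with inl k => L k | inr k => Lb k end.
Lemma l2sK : cancel l2s s2l. Proof. by case. Qed.
HB.instance Definition _ := Equality.copy letter (can_type l2sK).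

Definition idx (x : letter) : nat := match x with L k => k | Lb k => k end.

Lemma inert n i a : idx a < i -> i <= n ->
  letter_e n i a = None /\ letter_f n i a = None.
Proof.
case: a => k /= Hk Hi; split;
do ![case: ifP => [/andP[/eqP ? _]|_]; first lia] => //.
Qed.

Lemma foldr_maxn_le k s : k \in s -> k <= foldr maxn 0 s.
Proof.
elim: s => [|x s IH] //=; rewrite in_cons => /orP[/eqP->|/IH H].
  by rewrite leq_maxl.
by rewrite (leq_trans H) // leq_maxr.
Qed.

Lemma foldr_maxn0 s : all (fun k => k == 0) s -> foldr maxn 0 s = 0.
Proof. by elim: s => [|x s IH] //= /andP[/eqP -> /IH ->]. Qed.

Lemma maxk0 (T : Type) fuel (g : T -> option T) x : g x = None -> maxk fuel g x = 0.
Proof.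
move=> Hg; rewrite /maxk; apply: foldr_maxn0; apply/allP => k.
rewrite mem_filter => /andP[H _].
case: k H => [|k] //.
suff -> : iter k.+1 (obind g) (Some x) = None by [].
elim: k => [|k IH] /=; first by rewrite Hg.
by move: IH => /= ->.
Qed.

Lemma maxk1 (T : Type) fuel (g : T -> option T) x y : g x = Some y -> 0 < fuel ->
  0 < maxk fuel g x.
Proof.
move=> Hg Hf; rewrite /maxk; apply: foldr_maxn_le.
rewrite mem_filter /= Hg /= in_cons mem_iota; apply/orP; right; lia.
Qed.

Lemma wops_SS1 n i N w : (wops n i N.+2).1 w =
  (if maxk 2 (letter_e n i) (nth (L 0) w N.+1) <= maxk (2 * N.+1).+2 (wops n i N.+1).2 (take N.+1 w)
   then omap (fun b => rcons b (nth (L 0) w N.+1)) ((wops n i N.+1).1 (take N.+1 w))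
   else omap (fun b => rcons (take N.+1 w) b) (letter_e n i (nth (L 0) w N.+1))).
Proof. reflexivity. Qed.

Lemma wops_SS2 n i N w : (wops n i N.+2).2 w =
  (if maxk 2 (letter_e n i) (nth (L 0) w N.+1) < maxk (2 * N.+1).+2 (wops n i N.+1).2 (take N.+1 w)
   then omap (fun b => rcons b (nth (L 0) w N.+1)) ((wops n i N.+1).2 (take N.+1 w))
   else omap (fun b => rcons (take N.+1 w) b) (letter_f n i (nth (L 0) w N.+1))).
Proof. reflexivity. Qed.

Lemma f_inert n i N w : size w = N -> all (fun a => idx a < i) w -> i <= n ->
  (wops n i N).2 w = None.
Proof.
elim: N w => [|[|N] IH] w Hs Ha Hi //.
  rewrite /=; have Hm : nth (L 0) w 0 \in w by rewrite mem_nth // Hs.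
  by have [_ ->] := @inert n i _ (allP Ha _ Hm) Hi.
rewrite wops_SS2; case: ifP => _.
  rewrite IH //; first by rewrite size_take Hs ltnSn.
  by apply/allP => a /mem_take /(allP Ha).
have Hm : nth (L 0) w N.+1 \in w by rewrite mem_nth // Hs.
by have [_ ->] := @inert n i _ (allP Ha _ Hm) Hi.
Qed.

Lemma e_last n i P x y : all (fun a => idx a < i) P -> i <= n ->
  letter_e n i x = Some y -> word_e n i (rcons P x) <> None.
Proof.
move=> Ha Hi Hx; rewrite /word_e size_rcons.
case HP: (size P) => [|N].
  by move/eqP: HP; rewrite size_eq0 => /eqP -> /=; rewrite Hx.
rewrite wops_SS1 -HP nth_rcons ltnn eqxx -[in take _ _]cats1 take_size_cat //.
rewrite (maxk0 _ _ _ _ (@f_inert n i _ _ (erefl _) Ha Hi)) // leqn0.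
by rewrite (negbTE (lt0n_neq0 (@maxk1 _ 2 _ _ _ Hx (erefl _)))) // Hx.
Qed.

Lemma e_prefix1 n i w a : word_e n i (rcons w a) = None -> word_e n i w = None.
Proof.
rewrite /word_e size_rcons.
case Hw: (size w) => [|N] //.
rewrite wops_SS1 -Hw nth_rcons ltnn eqxx -[in take _ _]cats1 take_size_cat //.
case: ifP => H.
  by case: ((wops n i (size w)).1 w).
case He: (letter_e n i a) => [b|] //= _.
by move: H; rewrite (maxk0 _ _ _ _ He).
Qed.

Lemma e_prefix n i w s : word_e n i (w ++ s) = None -> word_e n i w = None.
Proof.
elim: s w => [|a s IH] w; first by rewrite cats0.
by rewrite -cat_rcons => /IH /e_prefix1.
Qed.
Set Implicit Arguments. Unset Strict Implicit.

Lemma size_mono n Y r r' : is_ssyt n Y -> r <= r' ->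
  size (nth [::] Y r') <= size (nth [::] Y r).
Proof.
case=> Hsort _ _ _ Hrr.
case: (ltnP r' (size Y)) => Hr'; last by rewrite nth_default.
have Ht : transitive geq by move=> a b c /= H1 H2; exact: leq_trans H2 H1.
have Hrf : reflexive geq by move=> a /=.
have := sorted_leq_nth Ht Hrf 0 Hsort.
move=> /(_ r r'); rewrite !inE !size_map !(nth_map [::]) //; last by lia.
by apply => //; lia.
Qed.

Lemma entry_valid n Y r c : is_ssyt n Y -> c < size (nth [::] Y r) ->
  valid_letter n (entry Y r c).
Proof.
case=> _ Hall _ _ Hc.
have Hr : r < size Y by case: (ltnP r (size Y)) => // H; move: Hc; rewrite nth_default.
have := allP Hall _ (mem_nth [::] Hr) => /allP; apply.
exact: mem_nth.
Qed.

Lemma row_mono n Y r c d : is_ssyt n Y -> c <= d -> d < size (nth [::] Y r) ->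
  rank n (entry Y r c) <= rank n (entry Y r d).
Proof.
case=> _ _ Hs _ Hcd Hd.
have Hr : r < size Y by case: (ltnP r (size Y)) => // H; move: Hd; rewrite nth_default.
have Hso := allP Hs _ (mem_nth [::] Hr).
have Ht : transitive (letter_le n) by move=> a b e; rewrite /letter_le; exact: leq_trans.
have Hrf : reflexive (letter_le n) by move=> a; rewrite /letter_le.
have := sorted_leq_nth Ht Hrf (L 0) Hso.
move=> /(_ c d); rewrite !inE; apply => //; exact: leq_ltn_trans Hcd Hd.
Qed.

Lemma col_mono n Y r k c : is_ssyt n Y -> c < size (nth [::] Y (r + k)) ->
  rank n (entry Y r c) <= rank n (entry Y (r + k) c).
Proof.
move=> HY; elim: k => [|k IH] Hc; first by rewrite addn0.
have Hc' : c < size (nth [::] Y (r + k)).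
  by apply: (leq_trans Hc); apply: size_mono HY _; lia.
apply: leq_trans (IH Hc') _.
case: HY => _ _ _ Hcol.
by rewrite addnS; apply: ltnW; apply: Hcol; rewrite -addnS.
Qed.

Lemma col_mono' n Y r r' c : is_ssyt n Y -> r <= r' -> c < size (nth [::] Y r') ->
  rank n (entry Y r c) <= rank n (entry Y r' c).
Proof. by move=> HY Hr; rewrite -(subnKC Hr); apply: col_mono. Qed.

Lemma rank_valid n x : valid_letter n x -> 0 < rank n x <= 2 * n.
Proof. by case: x => k /= /andP[]; lia. Qed.

Lemma rank_lb n Y r c : is_ssyt n Y -> c < size (nth [::] Y r) ->
  r < rank n (entry Y r c).
Proof.
move=> HY; elim: r => [|r IH] Hc.
  by case/andP: (rank_valid (entry_valid HY Hc)).
have Hc' : c < size (nth [::] Y r) by apply: (leq_trans Hc); apply: size_mono HY _.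
case: HY => _ _ _ Hcol.
exact: leq_ltn_trans (IH Hc') (Hcol _ _ Hc).
Qed.
Set Implicit Arguments. Unset Strict Implicit.

Lemma reading_split n Y r c : is_ssyt n Y -> c < size (nth [::] Y r) ->
  exists P S, reading Y = P ++ entry Y r c :: S /\
   forall a, a \in P -> exists r' c', a = entry Y r' c' /\
     c' < size (nth [::] Y r') /\ (c < c' \/ (c' = c /\ r' < r)).
Proof.
move=> HY Hc.
have Hr : r < size Y by case: (ltnP r (size Y)) => // H; move: Hc; rewrite nth_default.
have HW : c < size (head [::] Y).
  by rewrite -nth0; apply: (leq_trans Hc); apply: size_mono HY _.
set W := size (head [::] Y) in HW *.
have Ei : iota 0 W = iota 0 c ++ c :: iota c.+1 (W - c.+1).
  have E : W = c + (W - c.+1).+1 by lia.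
  by rewrite {1}E iotaD add0n.
have Hcol : column Y c = [seq nth (L 0) row c | row <- take r Y & c < size row]
     ++ entry Y r c :: [seq nth (L 0) row c | row <- drop r.+1 Y & c < size row].
  rewrite /column {1}(_ : Y = take r Y ++ nth [::] Y r :: drop r.+1 Y).
    by rewrite filter_cat map_cat /= Hc.
  by rewrite -drop_nth // cat_take_drop.
exists (flatten (map (column Y) (rev (iota c.+1 (W - c.+1)))) ++
        [seq nth (L 0) row c | row <- take r Y & c < size row]).
exists ([seq nth (L 0) row c | row <- drop r.+1 Y & c < size row] ++
        flatten (map (column Y) (rev (iota 0 c)))).
split.
  rewrite /reading -/W Ei rev_cat rev_cons -cats1 !map_cat !flatten_cat /= cats0 Hcol.
  by rewrite -!catA.
move=> a; rewrite mem_cat => /orP[].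
  move/flatten_mapP => [c' Hc' Ha].
  move: Hc'; rewrite mem_rev mem_iota => /andP[Hc1 Hc2].
  move: Ha => /mapP[row]; rewrite mem_filter => /andP[Hcs Hrow] ->.
  move: Hrow => /(nthP [::])[r' Hr' Hrow].
  exists r', c'; rewrite /entry Hrow; split => //; split => //; left; exact: Hc1.
move=> /mapP[row]; rewrite mem_filter => /andP[Hcs Hrow] ->.
move: Hrow => /(nthP [::])[r' Hr' Hrow].
have Hr'r : r' < r by move: Hr'; rewrite size_take Hr.
move: Hrow; rewrite nth_take // => Hrow.
exists r', c; rewrite /entry Hrow; split => //; split => //; right; split => //.
Qed.
Set Implicit Arguments. Unset Strict Implicit.

Definition good (r : nat) (x : letter) : bool :=
  match x with L k => k == r.+1 | Lb k => k <= r end.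

Lemma good_idx r x : good r x -> idx x <= r.+1.
Proof. by case: x => k /=; [move/eqP->|lia]. Qed.

Lemma letter_key n r x y z : valid_letter n x -> valid_letter n y -> valid_letter n z ->
  good r y -> r.+1 < rank n x -> rank n x <= rank n y -> rank n y <= rank n z ->
  idx z <= r.
Proof.
case: x => j /= /andP[? ?]; case: y => k /= /andP[? ?]; case: z => m /= /andP[? ?];
  try move/eqP => ?; try move=> ?; lia.
Qed.

Lemma bad_rank n r x : valid_letter n x -> r < rank n x -> ~~ good r x -> r.+1 < rank n x.
Proof. by case: x => j /= /andP[? ?] ? /eqP ?; lia. Qed.

Lemma bad_e n r x : valid_letter n x -> r < rank n x -> ~~ good r x ->
  exists i y, [/\ 1 <= i, i <= n, r < i & letter_e n i x = Some y].
Proof.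
case: x => j /= /andP[H1 H2] Hr Hb.
  have Hj : r.+1 < j by move/eqP: Hb; lia.
  exists j.-1, (L j.-1); split; try lia.
  have -> : (j == j.-1.+1) by apply/eqP; lia.
  by have -> : (j.-1 < n) by lia.
case: (ltnP j n) => Hjn.
  exists j, (Lb j.+1); split; try lia.
  by rewrite eqxx Hjn.
have Ej : j = n by lia.
exists j, (L n); split; try lia.
by rewrite Ej eqxx ltnn.
Qed.

Lemma step n Y r c : 1 <= n -> is_ssyt n Y -> sp_highest_weight n Y ->
  c < size (nth [::] Y r) ->
  (forall r' c', c < c' -> c' < size (nth [::] Y r') -> good r' (entry Y r' c')) ->
  (forall r', r' < r -> good r' (entry Y r' c)) ->
  good r (entry Y r c).
Proof.
move=> Hn HY Hhw Hc IHc IHr.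
apply/negPn/negP => Hbad.
have Hv := entry_valid HY Hc.
have Hlb := rank_lb HY Hc.
have [i [y [Hi1 Hin Hri Hy]]] := bad_e Hv Hlb Hbad.
have Hrk := bad_rank Hv Hlb Hbad.
have [P [S [Hread HP]]] := reading_split HY Hc.
have HPi : all (fun a => idx a < i) P.
  apply/allP => a /HP [r' [c' [-> [Hc' Hcase]]]].
  suff : idx (entry Y r' c') <= r by lia.
  case: Hcase => [Hcc|[Ec Hrr]].
    case: (ltnP r' r) => Hrr.
      by have := good_idx (IHc _ _ Hcc Hc'); lia.
    have Hcr : c' < size (nth [::] Y r) by apply: (leq_trans Hc'); exact: size_mono HY _.
    apply: (@letter_key n r (entry Y r c) (entry Y r c')).
    - exact: Hv.
    - exact: entry_valid HY Hcr.
    - exact: entry_valid HY Hc'.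
    - exact: IHc.
    - exact: Hrk.
    - by apply: row_mono HY _ _ => //; exact: ltnW.
    - exact: col_mono' HY Hrr Hc'.
  by subst c'; have := good_idx (IHr _ Hrr); lia.
have := Hhw i (introT andP (conj Hi1 Hin)).
rewrite Hread -cat_rcons => /e_prefix.
exact: (@e_last n i P _ y HPi Hin Hy).
Qed.

Lemma main n Y : 1 <= n -> is_ssyt n Y -> sp_highest_weight n Y ->
  forall k c, size (nth [::] Y 0) <= c + k ->
  forall r, c < size (nth [::] Y r) -> good r (entry Y r c).
Proof.
move=> Hn HY Hhw; elim=> [|k IHk] c Hk r Hc.
  have := size_mono HY (leq0n r); lia.
elim/ltn_ind: r Hc => r IHr Hc.
apply: (step Hn HY Hhw Hc).
  move=> r' c' Hcc Hc'; apply: (IHk c') => //; lia.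
move=> r' Hr'; apply: IHr => //.
by apply: (leq_trans Hc); apply: size_mono HY _; exact: ltnW.
Qed.

Unset Implicit Arguments.

Theorem lemma2p6 (n : nat) (Y : tableau) :
  1 <= n -> is_ssyt n Y -> sp_highest_weight n Y ->
  forall i, 1 <= i <= n ->
  forall r c, c < size (nth [::] Y r) ->
    (entry Y r c = L i -> r.+1 = i) /\ (entry Y r c = Lb i -> i < r.+1).
Proof.
move=> Hn HY Hhw i Hi r c Hc.
have Hg := main Hn HY Hhw (k := size (nth [::] Y 0)) (c := c) (leq_addl _ _) Hc.
split => E; move: Hg; rewrite E /=; first by move/eqP ->.
by [].
Qed.
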